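(* Let $A$ be an archimedean $*$-algebra, $x\in A$ with $x=x^*$, and $\bar x$ its image in $C^*(A)$. Then $\bar x\geq0$ in $C^*(A)$ if and only if $x+\alpha\in A_+$ for every positive rational $\alpha$.
   Context: A $*$-algebra is a unital algebra over $\mathbb{Q}$ with a $\mathbb{Q}$-linear involution $x\mapsto x^*$ satisfying $(xy)^*=y^*x^*$; rational scalars are identified with multiples of the unit. $A_+=\{\sum_{i=1}^n x_i^*x_i: n\in\mathbb{N},x_i\in A\}$, and $x\leq y$ means $y-x\in A_+$. For $x\in A$, $\|x\|=\sqrt{\inf\{\alpha\in\mathbb{Q}_{>0}: x^*x\leq\alpha\}}\in[0,\infty]$; $A_i=\{x:\|x\|=0\}$. $A$ is archimedean if $-1\notin A_+$ and $\|x\|<\infty$ for all $x$. $C^*(A)=\mathbb{C}\otimes_{\mathbb{R}}C^*_{\mathbb{R}}(A)$, where $C^*_{\mathbb{R}}(A)$ is the completion of $A/A_i$ with respect to the norm induced by $\|\cdot\|$. *)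

(* Defs.v *)
From HB Require Import structures.
From mathcomp Require Import all_boot all_order all_algebra.
Set Implicit Arguments. Unset Strict Implicit. Unset Printing Implicit Defensive.
Import Order.TTheory GRing.Theory Num.Theory.
Local Open Scope ring_scope.

Section StarAlg.
Variable A : lalgType rat.
Variable star : A -> A.

Definition is_star : Prop :=
  [/\ forall x y : A, star (x + y) = star x + star y,
      forall (a : rat) (x : A), star (a *: x) = a *: star x,
      forall x : A, star (star x) = x &
      forall x y : A, star (x * y) = star y * star x].

Definition Apos (y : A) : Prop :=
  exists s : seq A, y = \sum_(z <- s) (star z * z).

Definition sle (x y : A) : Prop := Apos (y - x).

(* the set {alpha in Q_{>0} : x^* x <= alpha} whose infimum is ||x||^2 *)
Definition norm_set (x : A) (a : rat) : Prop := 0 < a /\ sle (star x * x) a%:A.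

Definition norm_finite (x : A) : Prop := exists a, norm_set x a.

Definition norm2_lt (x : A) (e : rat) : Prop := exists a, norm_set x a /\ a < e.

Definition archimedean : Prop := ~ Apos (- 1) /\ forall x : A, norm_finite x.

Definition cauchy (f : nat -> A) : Prop :=
  forall e : rat, 0 < e -> exists N : nat, forall m n : nat,
    (N <= m)%N -> (N <= n)%N -> norm2_lt (f m - f n) e.

(* two Cauchy sequences define the same element of C*_R(A) *)
Definition seq_equiv (f g : nat -> A) : Prop :=
  forall e : rat, 0 < e -> exists N : nat, forall n : nat,
    (N <= n)%N -> norm2_lt (f n - g n) e.

(* Elements of C*(A) = C (x)_R C*_R(A) are u + i v with u, v in C*_R(A),
   with (u + i v)^* = u^* - i v^*.  For z = a + i b (a, b Cauchy sequences)
   z^* z = (a^* a + b^* b) + i (a^* b - b^* a).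
   xbar >= 0 in C*(A) iff xbar = z^* z for some z in C*(A). *)
Definition cstar_nonneg (x : A) : Prop :=
  exists a b : nat -> A, cauchy a /\ cauchy b /\
    seq_equiv (fun n => star (a n) * a n + star (b n) * b n) (fun _ => x) /\
    seq_equiv (fun n => star (a n) * b n - star (b n) * a n) (fun _ => 0).

End StarAlg.

(* Main.v *)
Require Import Defs.
From HB Require Import structures.
From mathcomp Require Import all_boot all_order all_algebra.
From mathcomp Require Import ring lra.
Set Implicit Arguments. Unset Strict Implicit. Unset Printing Implicit Defensive.
Import Order.TTheory GRing.Theory Num.Theory.
Local Open Scope ring_scope.


Section Basics.
Variable A : lalgType rat.

Lemma scalerAr_rat (a : rat) (x y : A) : x * (a *: y) = a *: (x * y).
Proof.
have dnz : ((denq a)%:~R : rat) != 0 by rewrite intr_eq0 denq_neq0.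
have key : forall v w : A, (denq a)%:~R *: v = (denq a)%:~R *: w -> v = w.
  move=> v w H; rewrite -[v]scale1r -[w]scale1r -(mulVf dnz) -!scalerA H //.
apply: key; rewrite scalerA [X in X *: (x * y)]mulrC -numqE.
rewrite scaler_int -mulrzAr -scaler_int scalerA [X in x * (X *: y)]mulrC -numqE.
by rewrite scaler_int mulrzAr -scaler_int.
Qed.

Variable star : A -> A.
Hypothesis Hs : is_star star.

Lemma starD x y : star (x + y) = star x + star y. Proof. by case: Hs. Qed.
Lemma starZ (a : rat) x : star (a *: x) = a *: star x. Proof. by case: Hs. Qed.
Lemma starK x : star (star x) = x. Proof. by case: Hs. Qed.
Lemma starM x y : star (x * y) = star y * star x. Proof. by case: Hs. Qed.
Lemma star0 : star 0 = 0.
Proof. by have := starZ 0 0; rewrite !scale0r. Qed.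
Lemma starN x : star (- x) = - star x.
Proof. by have := starZ (-1) x; rewrite !scaleN1r. Qed.
Lemma starB x y : star (x - y) = star x - star y.
Proof. by rewrite starD starN. Qed.
Lemma star1 : star 1 = 1.
Proof.
have := starM (star 1) 1; rewrite starK !mulr1 => H.
by rewrite -H starK.
Qed.
Lemma star_alg (c : rat) : star c%:A = c%:A.
Proof. by rewrite starZ star1. Qed.

Notation Apos := (Apos star).

Lemma Apos0 : Apos 0.
Proof. by exists [::]; rewrite big_nil. Qed.
Lemma AposD x y : Apos x -> Apos y -> Apos (x + y).
Proof. by move=> [s ->] [t ->]; exists (s ++ t); rewrite big_cat. Qed.
Lemma Apos_sq z : Apos (star z * z).
Proof. by exists [:: z]; rewrite big_seq1. Qed.
Lemma Apos_conj w P : Apos P -> Apos (star w * P * w).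
Proof.
move=> [s ->]; exists [seq z * w | z <- s]; rewrite big_map.
elim: s => [|z s IH]; first by rewrite !big_nil mulr0 mul0r.
rewrite !big_cons -IH mulrDr mulrDl starM !mulrA.
by [].
Qed.
Lemma Apos_natmul P n : Apos P -> Apos (P *+ n).
Proof.
move=> HP; elim: n => [|n IH]; first by rewrite mulr0n; exact: Apos0.
by rewrite mulrS; apply: AposD.
Qed.
Lemma Apos_sqscale (e : rat) P : Apos P -> Apos ((e * e) *: P).
Proof.
move=> [s ->]; exists [seq e *: z | z <- s]; rewrite big_map scaler_sumr.
apply: eq_bigr => z _.
by rewrite starZ -scalerAl scalerAr_rat scalerA.
Qed.
Lemma Apos_scale (c : rat) P : 0 <= c -> Apos P -> Apos (c *: P).
Proof.
move=> c0 HP.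
set d : rat := (denq c)%:~R.
have dnz : d != 0 by rewrite intr_eq0 denq_neq0.
have nge : (0 <= numq c * denq c)%R.
  by rewrite mulr_ge0 ?numq_ge0 // ltW // denq_gt0.
have -> : c = (d^-1 * d^-1) * (numq c * denq c)%:~R.
  by rewrite intrM numqE /d; field.
rewrite -scalerA; apply: Apos_sqscale.
case: (numq c * denq c) nge => [n|n] //= _.
by rewrite -[n%:~R]/(n%:R) scaler_nat; apply: Apos_natmul.
Qed.
Lemma Apos_alg (c : rat) : 0 <= c -> Apos c%:A.
Proof.
move=> c0; apply: Apos_scale => //.
by have := Apos_sq 1; rewrite star1 mulr1.
Qed.
End Basics.


Section Ev.
Variable A : lalgType rat.
Variable star : A -> A.
Hypothesis Hs : is_star star.
Variable h : A.
Hypothesis Hh : star h = h.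

Lemma comm_h : commr_rmorph (in_alg A) h.
Proof.
move=> c; rewrite /GRing.comm /= mulr_algl.
by rewrite -[c%:A]/(c *: 1) scalerAr_rat mulr1.
Qed.

Definition ev := horner_morph comm_h.

Lemma evC c : ev c%:P = c%:A. Proof. exact: horner_morphC. Qed.
Lemma evX : ev 'X = h. Proof. exact: horner_morphX. Qed.
Lemma evD p q : ev (p + q) = ev p + ev q. Proof. exact: rmorphD. Qed.
Lemma evB p q : ev (p - q) = ev p - ev q. Proof. exact: rmorphB. Qed.
Lemma evM p q : ev (p * q) = ev p * ev q. Proof. exact: rmorphM. Qed.
Lemma ev1 : ev 1 = 1. Proof. exact: rmorph1. Qed.
Lemma ev0 : ev 0 = 0. Proof. exact: rmorph0. Qed.

Lemma star_ev p : star (ev p) = ev p.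
Proof.
elim/poly_ind: p => [|p c IH]; first by rewrite ev0 (star0 Hs).
rewrite evD evM evX evC (starD Hs) (starM Hs) Hh IH (star_alg Hs).
by rewrite -evX -!evM mulrC.
Qed.

Definition Pos p := Apos star (ev p).

Lemma PosD p q : Pos p -> Pos q -> Pos (p + q).
Proof. by rewrite /Pos evD; apply: AposD. Qed.
Lemma Pos_sq q : Pos (q * q).
Proof. by rewrite /Pos evM -{1}star_ev; apply: Apos_sq. Qed.
Lemma Pos_conj q P : Pos P -> Pos (q * q * P).
Proof.
rewrite /Pos => HP.
rewrite !evM -mulrA -evM mulrC evM mulrA -{1}star_ev.
exact: Apos_conj.
Qed.
Lemma Pos_scale c P : 0 <= c -> Pos P -> Pos (c%:P * P).
Proof.
by rewrite /Pos evM evC mulr_algl => c0 HP; apply: Apos_scale.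
Qed.
Lemma Pos_const c : 0 <= c -> Pos c%:P.
Proof. by rewrite /Pos evC => c0; apply: Apos_alg. Qed.
Lemma Pos_eq p q : p = q -> Pos p -> Pos q.
Proof. by move=> ->. Qed.


Lemma Pos_div (c : rat) G H : 0 < c -> c%:P * G = H -> Pos H -> Pos G.
Proof.
move=> c0 EH PH.
have -> : G = (c^-1)%:P * H.
  by rewrite -EH mulrA -polyCM mulVf ?gt_eqF // mul1r.
by apply: Pos_scale => //; rewrite invr_ge0 ltW.
Qed.

Lemma Pos_half (mu l : rat) p : 0 < l -> mu <= l ^+ 2 ->
  Pos (mu%:P - p * p) -> Pos (l%:P - p).
Proof.
move=> l0 ml Hp.
apply: (@Pos_div (2 * l) _ ((l%:P - p) * (l%:P - p) + (l ^+ 2 - mu)%:P + (mu%:P - p * p))).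
- by rewrite mulr_gt0.
- by ring.
apply: PosD => //; apply: PosD; first exact: Pos_sq.
by apply: Pos_const; rewrite subr_ge0.
Qed.

Lemma Pos_bnd (d : rat) p : 0 < d -> Pos (d%:P - p) -> Pos (d%:P + p) ->
  Pos ((d ^+ 2)%:P - p * p).
Proof.
move=> d0 H1 H2.
apply: (@Pos_div (2 * d) _ ((d%:P + p) * (d%:P + p) * (d%:P - p) + (d%:P - p) * (d%:P - p) * (d%:P + p))).
- by rewrite mulr_gt0.
- by ring.
by apply: PosD; apply: Pos_conj.
Qed.

Definition nb p (r : rat) := forall b : rat, 0 < b -> Pos ((r ^+ 2 + b)%:P - p * p).

Lemma nb_mono p r r' : 0 <= r -> r <= r' -> nb p r -> nb p r'.
Proof.
move=> r0 rr H b b0.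
apply: (@Pos_eq ((r' ^+ 2 - r ^+ 2)%:P + ((r ^+ 2 + b)%:P - p * p))).
  by ring.
apply: PosD; last exact: H.
apply: Pos_const; rewrite subr_ge0; have rr0 : 0 <= r' by exact: le_trans rr.
by rewrite ler_sqr.
Qed.

Lemma nb_lim p r : 0 <= r -> (forall e, 0 < e -> nb p (r + e)) -> nb p r.
Proof.
move=> r0 H b b0.
set D := 4 * r + 2 + b.
have D0 : 0 < D by rewrite /D; lra.
set e := b / D.
have eD : e * D = b by rewrite /e mulfVK ?gt_eqF.
have e0 : 0 < e by rewrite /e divr_gt0.
have Hp := H e e0 (b / 2) ltac:(lra).
apply: (@Pos_eq ((r ^+ 2 + b - (r + e) ^+ 2 - b / 2)%:P + (((r + e) ^+ 2 + b / 2)%:P - p * p))).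
  by ring.
apply: PosD => //; apply: Pos_const.
rewrite /D in eD D0; clearbody e; clear D.
have e1 : e <= 1 by nra.
nra.
Qed.


Lemma nb_add_pos p q r s : 0 < r -> 0 < s -> nb p r -> nb q s -> nb (p + q) (r + s).
Proof.
move=> r0 s0 Hp Hq b b0.
set b' := b * r * s / (r + s) ^+ 2.
have rs0 : 0 < r + s by lra.
have b'0 : 0 < b' by rewrite /b' divr_gt0 ?exprn_gt0 // !mulr_gt0.
have Eb : (r + s) ^+ 2 * b' = b * r * s.
  by rewrite /b' mulrC mulfVK // expf_neq0 // gt_eqF.
apply: (@Pos_div (r * s) _ (((r + s) * s)%:P * ((r ^+ 2 + b')%:P - p * p) +
   ((r + s) * r)%:P * ((s ^+ 2 + b')%:P - q * q) + (s%:P * p - r%:P * q) * (s%:P * p - r%:P * q)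
   + (b * r * s - (r + s) ^+ 2 * b')%:P)).
- exact: mulr_gt0.
- by ring.
rewrite Eb subrr; apply: PosD; last by apply: Pos_const.
apply: PosD; last exact: Pos_sq.
apply: PosD; apply: Pos_scale; rewrite ?mulr_ge0 ?addr_ge0 ?ltW //.
  exact: Hp.
exact: Hq.
Qed.

Lemma nb_add p q r s : 0 <= r -> 0 <= s -> nb p r -> nb q s -> nb (p + q) (r + s).
Proof.
move=> r0 s0 Hp Hq; apply: nb_lim; first exact: addr_ge0.
move=> e e0.
have -> : r + s + e = (r + e / 2) + (s + e / 2) by field.
apply: nb_add_pos; rewrite ?addr_ge0 ?ltW //; try lra.
  by apply: nb_mono Hp => //; lra.
by apply: nb_mono Hq => //; lra.
Qed.

Lemma nb_mul p q r s : 0 <= r -> 0 <= s -> nb p r -> nb q s -> nb (p * q) (r * s).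
Proof.
move=> r0 s0 Hp Hq b b0.
set D := r ^+ 2 + s ^+ 2 + 1 + b.
have D0 : 0 < D by rewrite /D; nra.
set b' := b / D.
have eD : b' * D = b by rewrite /b' mulfVK ?gt_eqF.
have b'0 : 0 < b' by rewrite /b' divr_gt0.
apply: (@Pos_eq (q * q * ((r ^+ 2 + b')%:P - p * p) + (r ^+ 2 + b')%:P * ((s ^+ 2 + b')%:P - q * q)
   + ((r * s) ^+ 2 + b - (r ^+ 2 + b') * (s ^+ 2 + b'))%:P)).
  by ring.
apply: PosD; last first.
  apply: Pos_const; rewrite /D in eD D0; clearbody b'; clear D.
  have e1 : b' <= 1 by nra.
  nra.
apply: PosD; first by apply: Pos_conj; apply: Hp.
apply: Pos_scale; first by nra.
exact: Hq.
Qed.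

Lemma nb_const c : 0 <= c -> nb c%:P c.
Proof.
move=> c0 b b0; apply: (@Pos_eq b%:P); first by ring.
by apply: Pos_const; rewrite ltW.
Qed.

Lemma nb_neg p r : nb p r -> nb (- p) r.
Proof. by move=> H b b0; rewrite mulrNN; apply: H. Qed.

Lemma nb_scale c p r : 0 <= c -> 0 <= r -> nb p r -> nb (c%:P * p) (c * r).
Proof. by move=> c0 r0 H; apply: nb_mul => //; apply: nb_const. Qed.

Lemma nb_norm2 p r e : 0 <= r -> r ^+ 2 < e -> nb p r -> norm2_lt star (ev p) e.
Proof.
move=> r0 re H.
exists (r ^+ 2 + (e - r ^+ 2) / 2); split; last by lra.
split; first by nra.
rewrite /sle /Apos.
have := H ((e - r ^+ 2) / 2) ltac:(lra).
by rewrite /Pos evB evC evM star_ev.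
Qed.

End Ev.


Fixpoint zz (n : nat) : rat := if n is n'.+1 then 2^-1 * (1 + zz n' * zz n') else 0.

Lemma zz_bnd n : 0 <= zz n <= 1.
Proof. elim: n => [|n IH] /=; first by lra. case/andP: IH => H1 H2. apply/andP; split; nra. Qed.

Lemma zz_mono n : zz n <= zz n.+1.
Proof. have /andP[H1 H2] := zz_bnd n. rewrite /=. nra. Qed.

Lemma zz_w n : (1 - zz n) * (n%:R + 2) <= 2.
Proof.
elim: n => [|n IH]; first by rewrite /=; lra.
have /andP[H1 H2] := zz_bnd n.
have t0 : (0 : rat) <= n%:R by rewrite ler0n.
rewrite -natr1 /=.
set w := 1 - zz n in IH H1 H2 *.
have H3 : 0 <= (2 - w * (n%:R + 2)) * (2 - w) by apply: mulr_ge0; rewrite subr_ge0 //; rewrite /w; lra.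
rewrite /w in H3 IH *. nra.
Qed.

Lemma eventually_small (C e : rat) : 0 <= C -> 0 < e -> exists N : nat, forall n : nat,
  (N <= n)%N -> forall r, 0 <= r -> r * (n%:R + 2) <= C -> r ^+ 2 < e.
Proof.
move=> C0 e0.
have q0 : 0 <= C ^+ 2 / e by rewrite divr_ge0 ?sqr_ge0 ?ltW.
exists (Num.bound (C ^+ 2 / e)) => n Nn r r0 rC.
have := archi_boundP q0.
have : (Num.bound (C ^+ 2 / e))%:R <= (n%:R : rat) by rewrite ler_nat.
set B := (Num.bound (C ^+ 2 / e))%:R => Bn Bq.
have t0 : (0 : rat) <= n%:R by rewrite ler0n.
have Hq : C ^+ 2 < e * (n%:R + 2).
  have : C ^+ 2 / e * e = C ^+ 2 by rewrite mulfVK ?gt_eqF.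
  nra.
have H1 : (r * (n%:R + 2)) ^+ 2 <= C ^+ 2.
  by rewrite ler_sqr ?nnegrE // mulr_ge0 // addr_ge0.
nra.
Qed.

Section Seq.
Variable A : lalgType rat.
Variable star : A -> A.
Hypothesis Hs : is_star star.
Variable h : A.
Hypothesis Hh : star h = h.
Variable s : {poly rat}.
Hypothesis Hs1 : nb star h s 1.

Fixpoint yy (n : nat) : {poly rat} :=
  if n is n'.+1 then (2^-1)%:P * (s + yy n' * yy n') else 0.

Lemma nb_yy n : nb star h (yy n) (zz n).
Proof.
elim: n => [|n IH] /=.
  by rewrite -polyC0; apply: nb_const.
have /andP[H1 H2] := zz_bnd n.
apply: nb_scale => //; first by rewrite addr_ge0 ?mulr_ge0.
apply: nb_add => //; first by rewrite mulr_ge0.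
exact: nb_mul.
Qed.

Lemma nb_dy n : nb star h (yy n.+1 - yy n) (zz n.+1 - zz n).
Proof.
elim: n => [|n IH].
  have -> : yy 1 - yy 0 = (2^-1)%:P * s by rewrite /=; ring.
  have -> : zz 1 - zz 0 = 2^-1 * 1 by rewrite /=; ring.
  by apply: nb_scale.
have -> : yy n.+2 - yy n.+1 = (2^-1)%:P * ((yy n.+1 - yy n) * (yy n.+1 + yy n)).
  by rewrite /=; ring.
have -> : zz n.+2 - zz n.+1 = 2^-1 * ((zz n.+1 - zz n) * (zz n.+1 + zz n)).
  by rewrite /=; field.
have /andP[H1 H2] := zz_bnd n.
have /andP[H3 H4] := zz_bnd n.+1.
have H5 := zz_mono n.
apply: nb_scale => //; first by rewrite mulr_ge0 // ?subr_ge0 ?addr_ge0.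
apply: nb_mul => //; rewrite ?subr_ge0 ?addr_ge0 //.
apply: nb_add => //; exact: nb_yy.
Qed.

Lemma nb_diff n k : nb star h (yy (n + k) - yy n) (zz (n + k) - zz n).
Proof.
elim: k => [|k IH].
  by rewrite addn0 !subrr -polyC0; apply: nb_const.
have -> : yy (n + k.+1) - yy n = (yy (n + k).+1 - yy (n + k)) + (yy (n + k) - yy n).
  by rewrite addnS; ring.
have -> : zz (n + k.+1) - zz n = (zz (n + k).+1 - zz (n + k)) + (zz (n + k) - zz n).
  by rewrite addnS; ring.
have Hm : forall i j, (i <= j)%N -> zz i <= zz j.
  move=> i j /subnKC <-; elim: (j - i)%N => [|l IHl]; first by rewrite addn0.
  by rewrite addnS; apply: le_trans (zz_mono _).
apply: nb_add; rewrite ?subr_ge0 ?zz_mono ?Hm ?leq_addr //.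
exact: nb_dy.
Qed.

End Seq.


Lemma norm2_lt0 (A : lalgType rat) (star : A -> A) (Hs : is_star star) (e : rat) :
  0 < e -> norm2_lt star 0 e.
Proof.
move=> e0; exists (e / 2); split; last by lra.
split; first by lra.
rewrite /sle (star0 Hs) mul0r subr0; apply: (Apos_alg Hs); lra.
Qed.

Unset Implicit Arguments.

Theorem proposition2p8 (A : lalgType rat) (star : A -> A)
    (Hstar : is_star star) (Harch : archimedean star)
    (x : A) (hx : star x = x) :
  cstar_nonneg star x <->
  (forall alpha : rat, 0 < alpha -> Apos star (x + alpha%:A)).
Proof.
split.
- move=> [a [b [_ [_ [Heq _]]]]] al al0.
  have [N HN] := Heq (al ^+ 2) (exprn_gt0 2 al0).
  have [c [[c0 Hc] cl]] := HN N (leqnn N).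
  set y := star (a N) * a N + star (b N) * b N - x in Hc.
  have Hy : star y = y.
    by rewrite /y (starB Hstar) (starD Hstar) !(starM Hstar) !(starK Hstar) hx.
  have HP : Pos star y (al%:P - 'X).
    apply: (Pos_half Hstar Hy (mu := c)) => //; first exact: ltW.
    by rewrite /Pos evB evC evM evX -{1}Hy.
  move: HP; rewrite /Pos evB evC evX => HP.
  have -> : x + al%:A = (star (a N) * a N + star (b N) * b N) + (al%:A - y).
    by rewrite /y opprB addrCA [_ + (x - _)]addrC subrK addrC.
  by apply: AposD => //; apply: AposD; apply: Apos_sq.
- move=> Hpos.
  have [R [R0 HR]] := Harch.2 x.
  rewrite /sle hx in HR.
  set l := R + 1.
  have l0 : 0 < l by rewrite /l; lra.
  have l1 : 1 <= l by rewrite /l; lra.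
  have HlX : Pos star x (l%:P - 'X).
    apply: (Pos_half Hstar hx (mu := R)) => //; first by rewrite /l; nra.
    by rewrite /Pos evB evC evM evX.
  set k := (l ^+ 2)^-1.
  have kl2 : k * l ^+ 2 = 1 by rewrite /k mulVf // expf_neq0 // gt_eqF.
  have k0 : 0 < k by rewrite /k invr_gt0 exprn_gt0.
  clearbody k.
  set s := 1 - k%:P * 'X.
  have Hs1 : nb star x s 1.
    move=> b b0.
    set g := b / (3 + b).
    have g0 : 0 < g by rewrite /g divr_gt0 //; lra.
    have gb : g * (3 + b) = b by rewrite /g mulfVK // gt_eqF //; lra.
    clearbody g.
    have Hm : Pos star x ((1 + g)%:P - s).
      apply: (@Pos_eq _ _ _ ((g - k * (g * l ^+ 2))%:P + k%:P * ('X + (g * l ^+ 2)%:P))).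
        by rewrite /s; ring.
      apply: PosD.
        apply: (Pos_const Hstar); by rewrite mulrCA kl2 mulr1 subrr.
      apply: (Pos_scale Hstar); first exact: ltW.
      rewrite /Pos evD evX evC; apply: Hpos.
      by rewrite mulr_gt0 // exprn_gt0.
    have Hp : Pos star x ((1 + g)%:P + s).
      apply: (@Pos_eq _ _ _ ((2 + g - k * l)%:P + k%:P * (l%:P - 'X))).
        by rewrite /s; ring.
      apply: PosD; last by apply: (Pos_scale Hstar) => //; exact: ltW.
      apply: (Pos_const Hstar).
      have : k * l <= 1 by nra.
      lra.
    have Hb := Pos_bnd Hstar hx (d := 1 + g) ltac:(lra) Hm Hp.
    apply: (@Pos_eq _ _ _ ((1 ^+ 2 + b - (1 + g) ^+ 2)%:P + (((1 + g) ^+ 2)%:P - s * s))).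
      by ring.
    apply: PosD => //; apply: (Pos_const Hstar).
    have : g <= 1 by nra.
    nra.
  have Hm : forall i j, (i <= j)%N -> zz i <= zz j.
    move=> i j /subnKC <-; elim: (j - i)%N => [|q IHq]; first by rewrite addn0.
    by rewrite addnS; apply: le_trans (zz_mono _).
  exists (fun n => ev x (l%:P * (1 - yy s n))), (fun _ => 0).
  split.
    move=> e e0.
    have [N HN] := eventually_small (C := 2 * l) ltac:(lra) e0.
    exists N => m n Hm' Hn'.
    rewrite -evB.
    have key : forall i j, (N <= i)%N -> (i <= j)%N ->
        nb star x (l%:P * (1 - yy s j) - l%:P * (1 - yy s i)) (l * (zz j - zz i)).
      move=> i j _ ij.
      have -> : l%:P * (1 - yy s j) - l%:P * (1 - yy s i) = l%:P * (- (yy s j - yy s i)).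
        by ring.
      apply: (nb_scale Hstar hx); [exact: ltW | by rewrite subr_ge0 Hm | ].
      have := nb_diff Hstar hx Hs1 i (j - i); rewrite subnKC // => HH.
      exact: nb_neg HH.
    have bnd : forall i j, (N <= i)%N -> (i <= j)%N -> 0 <= l * (zz j - zz i) /\ (l * (zz j - zz i)) ^+ 2 < e.
      move=> i j Ni ij.
      have H0 : 0 <= l * (zz j - zz i) by apply: mulr_ge0; [exact: ltW | rewrite subr_ge0 Hm].
      split => //; apply: (HN i Ni) => //.
      have := zz_w i; have /andP[_ H1] := zz_bnd j; have /andP[H2 _] := zz_bnd i.
      have t0 : (0 : rat) <= i%:R by rewrite ler0n.
      move=> Hw.
      have E1 : 0 <= l * ((1 - zz j) * (i%:R + 2)) by apply: mulr_ge0; [lra | apply: mulr_ge0; lra].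
      have E2 : 0 <= l * (2 - (1 - zz i) * (i%:R + 2)) by apply: mulr_ge0; lra.
      nra.
    case: (leqP n m) => nm.
      have [B1 B2] := bnd n m Hn' nm.
      exact: (nb_norm2 Hstar hx B1 B2 (key n m Hn' nm)).
    have nm' := ltnW nm.
    have [B1 B2] := bnd m n Hm' nm'.
    have K := key m n Hm' nm'.
    have := nb_norm2 Hstar hx B1 B2 (nb_neg K).
    by rewrite opprB.
  split.
    move=> e e0; exists 0%N => m n _ _; rewrite subrr; exact: (norm2_lt0 Hstar).
  split.
    move=> e e0.
    have [N HN] := eventually_small (C := 2 * l ^+ 2 * 2) ltac:(nra) e0.
    exists N => n Hn.
    rewrite (star_ev Hstar hx) (star0 Hstar) mulr0 addr0 -evM -{2}(evX x) -evB.
    have E : (2 * l ^+ 2)%:P * (yy s n.+1 - yy s n) = (l ^+ 2)%:P * (s + yy s n * yy s n) - (2 * l ^+ 2)%:P * yy s n.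
      by rewrite [yy s n.+1]/= mulrBr mulrA -polyCM [2 * _]mulrC -mulrA mulfV ?mulr1.
    have -> : l%:P * (1 - yy s n) * (l%:P * (1 - yy s n)) - 'X =
              (2 * l ^+ 2)%:P * (yy s n.+1 - yy s n) + (k * l ^+ 2 - 1)%:P * 'X.
      by rewrite E /s; ring.
    rewrite kl2 subrr polyC0 mul0r addr0.
    have /andP[H1 H2] := zz_bnd n.
    have H3 := zz_mono n.
    have /andP[_ H4] := zz_bnd n.+1.
    have H0 : 0 <= 2 * l ^+ 2 * (zz n.+1 - zz n).
      by rewrite mulr_ge0 ?subr_ge0 // mulr_ge0 // sqr_ge0.
    apply: (nb_norm2 Hstar hx H0).
      apply: (HN n Hn) => //.
      have := zz_w n.
      have t0 : (0 : rat) <= n%:R by rewrite ler0n.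
      have l2 : 0 <= 2 * l ^+ 2 by rewrite mulr_ge0 // sqr_ge0.
      move=> Hw.
      have E1 : 0 <= 2 * l ^+ 2 * ((1 - zz n.+1) * (n%:R + 2)) by apply: mulr_ge0; [lra | apply: mulr_ge0; lra].
      have E2 : 0 <= 2 * l ^+ 2 * (2 - (1 - zz n) * (n%:R + 2)) by apply: mulr_ge0; lra.
      nra.
    apply: (nb_scale Hstar hx); [by rewrite mulr_ge0 // sqr_ge0 | by rewrite subr_ge0 | exact: nb_dy].
  move=> e e0; exists 0%N => n _.
  rewrite mulr0 (star0 Hstar) mul0r subrr subr0; exact: (norm2_lt0 Hstar).
Qed.
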